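(* Consider offline and online linear mixture MDPs with common state space $\mathcal S$, action space $\mathcal A$, horizon $H$, and identical reward functions $r=r^{\mathrm{off}}:\mathcal S\times\mathcal A\to[0,1]$, with $P(s'\mid s,a)=\langle\theta^*,\phi(s'\mid s,a)\rangle$, $P^{\mathrm{off}}(s'\mid s,a)=\langle\theta^{\mathrm{off},*},\phi(s'\mid s,a)\rangle$ for a feature map $\phi$ with $\sum_{s'}|\phi_j(s'\mid s,a)|\le1$ for all $(s,a,j)$, and $\|\theta^*-\theta^{\mathrm{off},*}\|_2\le\Delta$. Then for any fixed policy $\pi$, \[ \big|V_1^{\pi}(s_1)-V_1^{\mathrm{off},\pi}(s_1)\big|\le\frac{H(H-1)}{2}\Delta\sqrt d . \]
   Context: For a deterministic policy $\pi=(\pi_h)_{h\le H}$, $V^\pi_h$ and $V^{\mathrm{off},\pi}_h$ are the stage-$h$ value functions of $\pi$ under $P$ and $P^{\mathrm{off}}$ respectively: $V_h^\pi(s)=\mathbb E_\pi[\sum_{i=h}^Hr(s_i,a_i)\mid s_h=s]$, with $V^\pi_{H+1}=V^{\mathrm{off},\pi}_{H+1}=0$; $s_1$ is a state and both value functions are evaluated there. *)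

(* Defs.v *)
From mathcomp Require Import all_boot all_order all_algebra.
Set Implicit Arguments. Unset Strict Implicit. Unset Printing Implicit Defensive.
Import Order.TTheory GRing.Theory Num.Theory.
Local Open Scope ring_scope.

Section MDP.
Variables (R : rcfType) (S A : finType) (d : nat).

Definition mix_kernel (theta : 'I_d -> R) (phi : S -> A -> S -> 'I_d -> R)
  (s : S) (a : A) (s' : S) : R := \sum_(j < d) theta j * phi s a s' j.

Definition is_kernel (P : S -> A -> S -> R) : Prop :=
  (forall s a s', 0 <= P s a s') /\ (forall s a, \sum_(s' : S) P s a s' = 1).

(* Value with k remaining steps, horizon H, deterministic non-stationary
   policy pi (pi h is the stage-h decision rule, stages 1..H).
   With k = k'.+1 remaining steps the current stage is H - k'. *)
Fixpoint value_rem (P : S -> A -> S -> R) (r : S -> A -> R)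
  (pi : nat -> S -> A) (H k : nat) (s : S) : R :=
  match k with
  | 0 => 0
  | k'.+1 =>
      let a := pi (H - k')%N s in
      r s a + \sum_(s' : S) P s a s' * value_rem P r pi H k' s'
  end.

(* Stage-h value function V_h^pi, for 1 <= h <= H+1 (V_{H+1} = 0). *)
Definition value (P : S -> A -> S -> R) (r : S -> A -> R)
  (pi : nat -> S -> A) (H h : nat) (s : S) : R :=
  value_rem P r pi H (H.+1 - h)%N s.

Definition norm2 (v : 'I_d -> R) : R := Num.sqrt (\sum_(j < d) v j ^+ 2).
End MDP.

(* Main.v *)
Require Import Defs.
From mathcomp Require Import all_boot all_order all_algebra.
From mathcomp Require Import ring lra zify.
Import Order.TTheory GRing.Theory Num.Theory.
Local Open Scope ring_scope.

Lemma cs_sq (R : rcfType) (d : nat) (x : 'I_d -> R) :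
  (\sum_(j < d) x j) ^+ 2 <= d%:R * \sum_(j < d) x j ^+ 2.
Proof.
have H0 : 0 <= \sum_(i < d) \sum_(j < d) (x i - x j) ^+ 2.
  by apply: sumr_ge0 => i _; apply: sumr_ge0 => j _; exact: sqr_ge0.
have E : \sum_(i < d) \sum_(j < d) (x i - x j) ^+ 2
   = 2 * (d%:R * \sum_(j < d) x j ^+ 2) - 2 * (\sum_(j < d) x j) ^+ 2.
  have -> : \sum_(i < d) \sum_(j < d) (x i - x j) ^+ 2 =
     \sum_(i < d) (\sum_(j < d) x i ^+ 2 + \sum_(j < d) x j ^+ 2
        - 2 * (x i * \sum_(j < d) x j)).
    apply: eq_bigr => i _; rewrite -big_split /= mulr_sumr mulr_sumr -sumrB.
    by apply: eq_bigr => j _; ring.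
  rewrite sumrB big_split /= -mulr_sumr -mulr_suml.
  rewrite (eq_bigr (fun i => x i ^+ 2 *+ d)); last by move=> i _; rewrite sumr_const card_ord.
  rewrite sumr_const card_ord -sumrMnl.
  set a := \sum_(i < d) x i ^+ 2; set b := \sum_(i < d) x i.
  have Ed : forall y : R, y *+ d = y * d%:R by move=> y; rewrite mulr_natr.
  rewrite sumrMnl -/a Ed; ring.
lra.
Qed.

Lemma cs_abs (R : rcfType) (d : nat) (x : 'I_d -> R) :
  \sum_(j < d) `|x j| <= Num.sqrt d%:R * Num.sqrt (\sum_(j < d) x j ^+ 2).
Proof.
rewrite -sqrtrM ?ler0n //.
have h0 : 0 <= \sum_(j < d) `|x j| by apply: sumr_ge0.
rewrite -(ger0_norm h0) -sqrtr_sqr ler_sqrt; last first.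
  by apply: mulr_ge0; [exact: ler0n | apply: sumr_ge0 => j _; exact: sqr_ge0].
have := @cs_sq R d (fun j : 'I_d => `|x j|).
have -> : \sum_(j < d) `|x j| ^+ 2 = \sum_(j < d) x j ^+ 2.
  by apply: eq_bigr => j _; rewrite real_normK ?num_real.
by [].
Qed.

Lemma value_bounds (R : rcfType) (S A : finType) (P : S -> A -> S -> R)
  (r : S -> A -> R) (pi : nat -> S -> A) (H : nat)
  (hr : forall s a, 0 <= r s a <= 1) (hP : is_kernel P) :
  forall k s, 0 <= value_rem P r pi H k s <= k%:R.
Proof.
case: hP => hP0 hP1.
elim=> [|k IH] s /=; first by rewrite lexx.
set a := pi (H - k)%N s.
have [r0 r1] := andP (hr s a).
have h1 : 0 <= \sum_(s' : S) P s a s' * value_rem P r pi H k s'.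
  by apply: sumr_ge0 => s' _; apply: mulr_ge0 => //; case/andP: (IH s').
have h2 : \sum_(s' : S) P s a s' * value_rem P r pi H k s' <= k%:R.
  apply: le_trans (_ : \sum_(s' : S) P s a s' * k%:R <= _).
    by apply: ler_sum => s' _; apply: ler_wpM2l => //; case/andP: (IH s').
  by rewrite -mulr_suml hP1 mul1r.
rewrite -natr1; apply/andP; split; lra.
Qed.

Lemma step_bound (R : rcfType) (S A : finType) (d : nat)
  (phi : S -> A -> S -> 'I_d -> R) (theta theta_off : 'I_d -> R)
  (hphi : forall s a (j : 'I_d), \sum_(s' : S) `|phi s a s' j| <= 1)
  (V : S -> R) (k : R) (hk : 0 <= k) (hV : forall s, 0 <= V s <= k) (s : S) (a : A) :
  `| \sum_(s' : S) (mix_kernel theta phi s a s' - mix_kernel theta_off phi s a s') * V s' |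
  <= k * \sum_(j < d) `|theta j - theta_off j|.
Proof.
have -> : \sum_(s' : S) (mix_kernel theta phi s a s' - mix_kernel theta_off phi s a s') * V s'
   = \sum_(j < d) (theta j - theta_off j) * \sum_(s' : S) phi s a s' j * V s'.
  under [RHS]eq_bigr do rewrite mulr_sumr.
  rewrite [RHS]exchange_big /=; apply: eq_bigr => s' _.
  rewrite /mix_kernel -sumrB mulr_suml; apply: eq_bigr => j _; ring.
apply: le_trans (ler_norm_sum _ _ _) _.
rewrite mulr_sumr; apply: ler_sum => j _.
rewrite normrM mulrC ler_wpM2r //.
apply: le_trans (ler_norm_sum _ _ _) _.
apply: le_trans (_ : \sum_(s' : S) `|phi s a s' j| * k <= _).
  apply: ler_sum => s' _; rewrite normrM ler_wpM2l //.
  by have /andP[h0 h1] := hV s'; rewrite ger0_norm.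
by rewrite -mulr_suml -[X in _ <= X]mul1r ler_wpM2r.
Qed.

Theorem propositionB1 (R : rcfType) (S A : finType) (d H : nat)
  (r : S -> A -> R) (phi : S -> A -> S -> 'I_d -> R)
  (theta theta_off : 'I_d -> R) (Delta : R)
  (hr : forall s a, 0 <= r s a <= 1)
  (hphi : forall s a (j : 'I_d), \sum_(s' : S) `|phi s a s' j| <= 1)
  (hP : is_kernel (mix_kernel theta phi))
  (hPoff : is_kernel (mix_kernel theta_off phi))
  (hDelta : norm2 (fun j => theta j - theta_off j) <= Delta)
  (pi : nat -> S -> A) (s1 : S) :
  `| value (mix_kernel theta phi) r pi H 1 s1
     - value (mix_kernel theta_off phi) r pi H 1 s1 |
  <= (H * (H - 1))%:R / 2 * Delta * Num.sqrt d%:R.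

Proof.
have hnd : 0 <= norm2 (fun j => theta j - theta_off j) by rewrite /norm2 sqrtr_ge0.
have hD0 : 0 <= Delta by apply: le_trans hnd hDelta.
set c := Delta * Num.sqrt d%:R.
have hc : 0 <= c by rewrite /c mulr_ge0 ?sqrtr_ge0.
have hsum : \sum_(j < d) `|theta j - theta_off j| <= c.
  apply: le_trans (@cs_abs R d (fun j => theta j - theta_off j)) _.
  by rewrite /c mulrC ler_wpM2r ?sqrtr_ge0.
set P := mix_kernel theta phi; set Po := mix_kernel theta_off phi.
have main : forall k s, `|value_rem P r pi H k s - value_rem Po r pi H k s|
    <= (k * (k - 1))%:R / 2 * c.
  elim=> [|k IH] s /=; first by rewrite subrr normr0 mul0r mul0r.
  set a := pi (H - k)%N s.
  set V := value_rem P r pi H k; set W := value_rem Po r pi H k.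
  have -> : r s a + \sum_(s' : S) P s a s' * V s' - (r s a + \sum_(s' : S) Po s a s' * W s')
     = \sum_(s' : S) (P s a s' - Po s a s') * V s' + \sum_(s' : S) Po s a s' * (V s' - W s').
    rewrite -big_split /= opprD addrACA subrr add0r -sumrB; apply: eq_bigr => s' _; ring.
  apply: le_trans (ler_normD _ _) _.
  have b1 : `|\sum_(s' : S) (P s a s' - Po s a s') * V s'| <= k%:R * c.
    apply: le_trans (@step_bound R S A d phi theta theta_off hphi V k%:R (ler0n _ k) (@value_bounds R S A P r pi H hr hP k) s a) _.
    by rewrite ler_wpM2l.
  have b2 : `|\sum_(s' : S) Po s a s' * (V s' - W s')| <= (k * (k - 1))%:R / 2 * c.
    case: hPoff => hP0 hP1.
    apply: le_trans (ler_norm_sum _ _ _) _.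
    apply: le_trans (_ : \sum_(s' : S) Po s a s' * ((k * (k - 1))%:R / 2 * c) <= _).
      by apply: ler_sum => s' _; rewrite normrM ger0_norm // ler_wpM2l.
    by rewrite -mulr_suml hP1 mul1r.
  have -> : (k.+1 * (k.+1 - 1))%N = (k * (k - 1) + 2 * k)%N by case: k {IH b1 b2 V W a} => //= k; nia.
  rewrite natrD natrM; lra.
have := main H s1.
by rewrite /value subSS subn0 /c mulrA.
Qed.
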